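(* Let $q$ be odd with $q\equiv1\pmod4$ fixed. Then, as $g\to\infty$, $$\sum_{\substack{P\text{ monic irreducible}\\ \deg P=2g+1}}\ \sum_{n=0}^{g}\ \sum_{\substack{f\text{ monic},\ \deg f=n\\ f=\square}}\chi_P(f)\,q^{-n/2}=\frac{|P|}{\log_q|P|}\left(\left[\frac g2\right]+1\right)+O\!\left(\frac{\sqrt{|P|}}{\log_q|P|}\,g\right),$$ where $|P|=q^{2g+1}$, $\log_q|P|=2g+1$, and $[x]$ is the integer part of $x$.
   Context: $A=\mathbb{F}_q[T]$; for nonzero $f\in A$, $|f|=q^{\deg f}$. ''$f=\square$'' means $f$ is the square of a monic polynomial. For a monic irreducible $Q$ and $a\in A$, $\left(\frac{a}{Q}\right)$ is $0$ if $Q\mid a$, $1$ if $a$ is a nonzero square mod $Q$, $-1$ otherwise; extended to monic $f=\prod Q_i^{e_i}$ by $\left(\frac{a}{f}\right)=\prod\left(\frac{a}{Q_i}\right)^{e_i}$, $\left(\frac{a}{1}\right)=1$. For monic irreducible $P$, $\chi_P(f)=\left(\frac{P}{f}\right)$. Implied constants may depend on $q$. *)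

(* Defs.v *)
From HB Require Import structures.
From Stdlib Require Import ClassicalEpsilon.
From mathcomp Require Import all_boot all_order all_algebra.
Set Implicit Arguments. Unset Strict Implicit. Unset Printing Implicit Defensive.
Import Order.TTheory GRing.Theory Num.Theory.
Local Open Scope ring_scope.

Definition pdec (P : Prop) : bool :=
  if excluded_middle_informative P then true else false.

Section FqT.
Variable F : finFieldType.

(* The monic polynomial T^n + t_{n-1} T^{n-1} + ... + t_0 ;
   every monic polynomial of degree n arises from exactly one t. *)
Definition mkmonic (n : nat) (t : {ffun 'I_n -> F}) : {poly F} :=
  'X^n + \sum_(i < n) t i *: 'X^i.

Definition monic_irr (p : {poly F}) : bool :=
  (p \is monic) && pdec (irreducible_poly p).

Definition is_msquare (f : {poly F}) : bool :=
  pdec (exists h : {poly F}, h \is monic /\ f = h ^+ 2).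

Definition legendre (a Q : {poly F}) : int :=
  if Q %| a then 0
  else if pdec (exists b : {poly F}, Q %| a - b ^+ 2) then 1 else -1.

Definition pmult (Q f : {poly F}) : nat :=
  \max_(e < size f | Q ^+ e %| f) e.

(* (a / f) = prod over the monic irreducible Q | f of (a/Q)^(v_Q(f)),
   Q ranging over all monic irreducibles of degree <= deg f. *)
Definition jacobi (a f : {poly F}) : int :=
  \prod_(d < size f)
    \prod_(t : {ffun 'I_d -> F} | monic_irr (mkmonic t))
      legendre a (mkmonic t) ^+ pmult (mkmonic t) f.

Definition chiP (P f : {poly F}) : int := jacobi P f.

End FqT.

(* Main.v *)
Require Import Defs.
From HB Require Import structures.
From Stdlib Require Import ClassicalEpsilon Classical.
From mathcomp Require Import all_boot all_order all_algebra all_field.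
From mathcomp Require Import zify ring lra.
Import Order.TTheory GRing.Theory Num.Theory.
Local Open Scope ring_scope.
Set Implicit Arguments. Unset Strict Implicit. Unset Printing Implicit Defensive.

Section Basic.
Variable F : finFieldType.

Lemma sum_small_size n (t : {ffun 'I_n -> F}) :
  leq (size (\sum_(i < n) t i *: 'X^i : {poly F})) n.
Proof.
apply: (leq_trans (size_sum _ _ _)); apply/bigmax_leqP => i _.
by apply: (leq_trans (size_scale_leq _ _)); rewrite size_polyXn.
Qed.

Lemma mkmonic_coefI n (t : {ffun 'I_n -> F}) (i : 'I_n) :
  (mkmonic t)`_i = t i.
Proof.
rewrite /mkmonic coefD coefXn coef_sum (ltn_eqF (ltn_ord i)) add0r.
rewrite (bigD1 i) //= coefZ coefXn eqxx mulr1 big1 ?addr0 // => j ji.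
rewrite coefZ coefXn; case: eqP; rewrite ?mulr0 // => e.
by move: ji; rewrite -val_eqE /= e eqxx.
Qed.

Lemma size_mkmonic n (t : {ffun 'I_n -> F}) : size (mkmonic t) = n.+1.
Proof.
rewrite /mkmonic size_addl ?size_polyXn // ltnS; exact: sum_small_size.
Qed.

Lemma monic_mkmonic n (t : {ffun 'I_n -> F}) : mkmonic t \is monic.
Proof.
rewrite /mkmonic addrC monicE lead_coefDr ?lead_coefXn // size_polyXn; exact: (leq_ltn_trans (sum_small_size t)).
Qed.

Lemma mkmonic_neq0 n (t : {ffun 'I_n -> F}) : mkmonic t != 0.
Proof. by rewrite -size_poly_gt0 size_mkmonic. Qed.

Lemma mkmonic_inj n : injective (@mkmonic F n).
Proof.
move=> t1 t2 e; apply/ffunP => i.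
by have := congr1 (fun p : {poly F} => p`_i) e; rewrite !mkmonic_coefI.
Qed.

Lemma mkmonic_surj n (p : {poly F}) : p \is monic -> size p = n.+1 ->
  mkmonic [ffun i : 'I_n => p`_i] = p.
Proof.
move=> mp sp; apply/polyP => i.
case: (ltnP i n) => [lt|le].
  by rewrite (mkmonic_coefI _ (Ordinal lt)) ffunE.
have mm := monic_mkmonic [ffun i : 'I_n => p`_i].
have sm := size_mkmonic [ffun i : 'I_n => p`_i].
case: (eqVneq i n) => [->|ne].
  move: mp mm; rewrite !monicE /lead_coef sp sm /= => /eqP -> /eqP -> //.
rewrite !nth_default // ?sp ?sm ltn_neqAle eq_sym ne //.
Qed.

End Basic.

Section FF.
Variable F : finFieldType.

Lemma card_pexp : exists2 p, p \in [pchar F] & #|F| = (p ^ logn p #|F|)%N.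
Proof.
have [p _ pc] := finPcharP F; exists p => //.
exact: (card_pprimeChar pc).
Qed.

Lemma expcard_add (K : comAlgType F) N (x y : K) :
  (x + y) ^+ (#|F| ^ N) = x ^+ (#|F| ^ N) + y ^+ (#|F| ^ N).
Proof.
have [p pc ->] := card_pexp.
have pK : p \in [pchar K] by rewrite pchar_lalg.
rewrite -expnM; elim: (_ * N)%N => [|n IH]; first by rewrite !expr1.
rewrite expnSr !exprM IH -!(pFrobenius_autE pK) pFrobenius_autD_comm //; exact: mulrC.
Qed.

Lemma expcard_F N (a : F) : a ^+ (#|F| ^ N) = a.
Proof.
elim: N => [|n IH]; first by rewrite expr1.
by rewrite expnSr exprM IH expf_card.
Qed.

End FF.

Lemma horner_exp_gen (F : finFieldType) (L : comAlgType F)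
  (f : {rmorphism F -> L}) e (p : {poly F}) (x : L) :
  (map_poly f p).[x] ^+ (#|F| ^ e) = (map_poly f p).[x ^+ (#|F| ^ e)].
Proof.
elim/poly_ind: p => [|p c IH].
  by rewrite rmorph0 !horner0 expr0n expn_eq0 (gtn_eqF (ltnW (finNzRing_gt1 F))).
rewrite rmorphD rmorphM /= map_polyX map_polyC /= !hornerMXaddC.
rewrite expcard_add exprMn IH; congr (_ + _).
by rewrite -rmorphXn expcard_F.
Qed.

Lemma sizeXmX (R : nzRingType) m : (1 < m)%N -> size ('X^m - 'X : {poly R}) = m.+1.
Proof.
move=> m1; rewrite size_addl size_polyXn //.
by rewrite size_polyN size_polyX ltnS.
Qed.

Section QF.
Variable F : finFieldType.
Variable P : {poly F}.
Hypothesis hI : monic_irreducible_poly P.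
Local Notation K := {poly %/ P with hI}.


Definition xK : K := in_qpoly P 'X.

Lemma in_qpoly_horner (p : {poly F}) :
  (in_qpoly P p : K) = (map_poly (qpolyC P) p).[xK].
Proof. by rewrite -in_qpoly_comp_horner comp_polyXr. Qed.

Lemma in_qpoly_id (y : K) : in_qpoly P (y : {poly F}) = y.
Proof. apply: val_inj; exact: (in_qpoly_small (size_mk_monic y)). Qed.

Lemma in_qpoly_eq0 (p : {poly F}) : (in_qpoly P p == 0 :> K) = (P %| p).
Proof.
rewrite dvdpE -val_eqE /= (mk_monicE hI).
by apply/eqP/idP => [/Pdiv.Ring.rmodp_eq0P | /Pdiv.Ring.rmodp_eq0P].
Qed.

Lemma card_K : #|K| = (#|F| ^ (size P).-1)%N.
Proof. exact: card_qfpoly. Qed.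


Lemma xK_card : xK ^+ #|K| = xK.
Proof. exact: expf_card. Qed.

Lemma factB : P %| 'X^(#|F| ^ (size P).-1) - 'X.
Proof.
rewrite -in_qpoly_eq0 rmorphB rmorphXn /= -card_K.
by rewrite -/xK xK_card subrr.
Qed.

Lemma size_P_gt1 : (1 < size P)%N.
Proof. by case: hI => [[]]. Qed.

Lemma factA N : P %| 'X^(#|F| ^ N) - 'X -> ((size P).-1 %| N)%N.
Proof.
rewrite -in_qpoly_eq0 rmorphB rmorphXn /= subr_eq0 -/xK => /eqP hx.
have hall e : (forall y : K, y ^+ (#|F| ^ e) = y) ->
   forall m, forall y : K, y ^+ (#|F| ^ (e * m)) = y.
  move=> he; elim=> [|m IH] y; first by rewrite muln0 expn0 expr1.
  by rewrite mulnS expnD exprM he IH.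
have hN : forall y : K, y ^+ (#|F| ^ N) = y.
  move=> y; rewrite -(in_qpoly_id y) in_qpoly_horner (horner_exp_gen (qpolyC P)).
  by rewrite hx.
have hd : forall y : K, y ^+ (#|F| ^ (size P).-1) = y.
  by move=> y; rewrite -card_K expf_card.
set d := (size P).-1 in hd *.
have hr : forall y : K, y ^+ (#|F| ^ (N %% d)) = y.
  move=> y; rewrite -{2}(hN y) {2}(divn_eq N d) expnD exprM mulnC.
  by rewrite (hall _ hd).
have d_gt0 : (0 < d)%N by rewrite /d -ltnS prednK ?size_P_gt1 // ltnW // size_P_gt1.
rewrite /dvdn; apply/negPn/negP => r0.
have q1 : (1 < #|F|)%N := finNzRing_gt1 F.
have rpos : (0 < N %% d)%N by rewrite lt0n.
have qr : (1 < #|F| ^ (N %% d))%N by rewrite -(expn0 #|F|) ltn_exp2l.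
have nz : ('X^(#|F| ^ (N %% d)) - 'X : {poly K}) != 0.
  by rewrite -size_poly_gt0 sizeXmX.
have := max_poly_roots nz _ (enum_uniq K).
rewrite sizeXmX //.
rewrite -cardE card_K ltnS leqNgt ltn_exp2l // ltn_mod d_gt0 /=.
move=> H; suff: false by []; apply: H; apply/allP => y _.
by rewrite rootE !hornerE hr subrr.
Qed.

End QF.

Lemma pdecP (P : Prop) : pdec P = true <-> P.
Proof. by rewrite /pdec; case: excluded_middle_informative. Qed.

Section Count.
Variable F : finFieldType.

Lemma monic_irrP (p : {poly F}) :
  monic_irr p <-> (p \is monic /\ irreducible_poly p).
Proof.
rewrite /monic_irr; split.
  by case/andP => -> /pdecP.
by case=> -> /pdecP ->.
Qed.

Lemma irr_scale (c : F) (p : {poly F}) : c != 0 -> irreducible_poly p ->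
  irreducible_poly (c *: p).
Proof.
move=> c0 [s1 H]; split; first by rewrite size_scale.
move=> q sq; rewrite dvdpZr // => /(H _ sq) e.
by apply: eqp_trans e _; rewrite eqp_sym eqp_scale.
Qed.

Lemma irr_divisor (Q : {poly F}) : (1 < size Q)%N ->
  exists p, [/\ p \is monic, irreducible_poly p & p %| Q].
Proof.
move: {2}(size Q) (leqnn (size Q)) => n; elim: n Q => [|n IH] Q sQ sQ1.
  by move: (leq_trans sQ1 sQ).
have Q0 : Q != 0 by rewrite -size_poly_gt0 ltnW.
case: (classic (irreducible_poly Q)) => [irr|nirr].
  have lc0 : lead_coef Q != 0 by rewrite lead_coef_eq0.
  exists ((lead_coef Q)^-1 *: Q); split.
  - by rewrite monicE lead_coefZ mulVf.
  - by apply: irr_scale => //; rewrite invr_eq0.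
  - by rewrite dvdpZl // invr_eq0.
have [q [sq qQ nqQ]] : exists q : {poly F}, [/\ size q != 1%N, q %| Q & ~~ (q %= Q)].
  apply: NNPP => H; apply: nirr; split => // q sq qQ.
  apply: NNPP => nq; apply: H; exists q; split => //; exact/negP.
have q0 : q != 0 by apply: contraNneq Q0 => q0; move: qQ; rewrite q0 dvd0p.
have sqQ : (size q < size Q)%N.
  rewrite ltn_neqAle dvdp_leq // andbT; apply: contra nqQ => /eqP e.
  by rewrite -dvdp_size_eqp // e.
have sq1 : (1 < size q)%N.
  by rewrite ltn_neqAle eq_sym sq /= size_poly_gt0.
have sqn : (size q <= n)%N by rewrite -ltnS (leq_trans sqQ sQ).
have [p [mp ip pq]] := IH q sqn sq1.
by exists p; split => //; apply: dvdp_trans pq qQ.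
Qed.

Lemma coprime_irr (p r : {poly F}) : p \is monic -> irreducible_poly p ->
  r \is monic -> irreducible_poly r -> p != r -> coprimep p r.
Proof.
move=> mp ip mr ir pr; rewrite irreducible_poly_coprime //.
apply: contra pr => pdr.
have sp : size p != 1%N by case: ip => s _; rewrite neq_ltn s orbT.
by case: ir => _ /(_ p sp pdr); rewrite eqp_monic.
Qed.

Lemma prod_dvd (Q : {poly F}) (s : seq {poly F}) : uniq s ->
  (forall p, p \in s -> [/\ p \is monic, irreducible_poly p & p %| Q]) ->
  \prod_(p <- s) p %| Q.
Proof.
elim: s => [|p s IH] /=; first by rewrite big_nil dvd1p.
case/andP => ps us H; rewrite big_cons Gauss_dvdp.
  have [_ _ ->] := H p (mem_head _ _).
  by rewrite IH // => r rs; apply: H; rewrite inE rs orbT.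
have [mp ip _] := H p (mem_head _ _).
rewrite big_seq; apply: (big_ind (fun x => coprimep p x)).
- exact: coprimep1.
- by move=> x y cx cy; rewrite coprimepMr cx cy.
move=> r rs; have [mr ir _] : [/\ r \is monic, irreducible_poly r & r %| Q].
  by apply: H; rewrite inE rs orbT.
by apply: coprime_irr => //; apply: contraNneq ps => ->.
Qed.

Lemma size_prod_monic (s : seq {poly F}) : (forall p, p \in s -> p \is monic) ->
  size (\prod_(p <- s) p) = (\sum_(p <- s) (size p).-1).+1.
Proof.
elim: s => [|p s IH] H; first by rewrite !big_nil size_poly1.
rewrite !big_cons size_monicM ?H ?mem_head //; last first.
  apply: monic_neq0; rewrite big_seq; apply: monic_prod => i iS.
  by apply: H; rewrite inE iS orbT.
rewrite IH; last by move=> r rs; apply: H; rewrite inE rs orbT.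
have : (0 < size p)%N by rewrite size_poly_gt0 monic_neq0 // H ?mem_head.
by case: (size p) => // k _ /=; rewrite addnS.
Qed.

Definition pi_ d := #|[pred t : {ffun 'I_d -> F} | monic_irr (mkmonic t)]|.

Definition irr_seq d : seq {poly F} :=
  [seq mkmonic t | t <- enum [pred t : {ffun 'I_d -> F} | monic_irr (mkmonic t)]].

Lemma sum_irr_seq d : (\sum_(p <- irr_seq d) (size p).-1 = d * pi_ d)%N.
Proof.
rewrite big_map big_enum /=.
under eq_bigr => t _ do rewrite size_mkmonic /=.
by rewrite sum_nat_const mulnC.
Qed.

Lemma mem_irr_seq d p : (p \in irr_seq d) = (monic_irr p && (size p == d.+1)).
Proof.
apply/mapP/idP => [[t]|/andP[mi /eqP sp]].
  by rewrite mem_enum inE => mi ->; rewrite mi size_mkmonic eqxx.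
exists [ffun i : 'I_d => p`_i]; last by rewrite mkmonic_surj //; case/monic_irrP: mi.
by rewrite mem_enum inE mkmonic_surj //; case/monic_irrP: mi.
Qed.

Lemma upper_bound d : (d * pi_ d <= #|F| ^ d)%N.
Proof.
have q1 := finNzRing_gt1 F.
case: d => [|d]; first by rewrite mul0n.
have qd : (1 < #|F| ^ d.+1)%N.
  by rewrite -(expn0 #|F|) ltn_exp2l.
have Q0 : ('X^(#|F| ^ d.+1) - 'X : {poly F}) != 0.
  by rewrite -size_poly_gt0 sizeXmX.
have uq : uniq (irr_seq d.+1).
  by rewrite map_inj_uniq ?enum_uniq //; apply: mkmonic_inj.
have hp : forall p, p \in irr_seq d.+1 ->
    [/\ p \is monic, irreducible_poly p & p %| 'X^(#|F| ^ d.+1) - 'X].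
  move=> p; rewrite mem_irr_seq => /andP[/monic_irrP[mp ip] /eqP sp].
  by split => //; have := factB (ip, mp); rewrite sp.
have := dvdp_leq Q0 (prod_dvd uq hp).
rewrite size_prod_monic ?sizeXmX // ?sum_irr_seq ?ltnS //.
by move=> p /hp [].
Qed.

End Count.

Section Lower.
Variable F : finFieldType.

Lemma sqf_bound (Q : {poly F}) (s : seq {poly F}) : Q != 0 ->
  (forall p, p \is monic -> irreducible_poly p -> ~~ (p * p %| Q)) ->
  (forall p, p \is monic -> irreducible_poly p -> p %| Q -> p \in s) ->
  ((size Q).-1 <= \sum_(p <- s) (size p).-1)%N.
Proof.
move: {2}(size Q) (leqnn (size Q)) => n; elim: n Q s => [|n IH] Q s sQ Q0 hsq hin.
  by move: sQ; rewrite leqn0 => /eqP ->.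
case: (leqP (size Q) 1) => [s1|s1]; first by move: s1; case: (size Q) => [|[]].
have [p [mp ip pQ]] := irr_divisor s1.
have ps := hin p mp ip pQ.
case/dvdpP: pQ => Q' eQ.
have Q'0 : Q' != 0 by apply: contraNneq Q0 => e; rewrite eQ e mul0r.
have sp1 : (1 < size p)%N by case: ip => [].
have sQe : size Q = (size Q' + size p).-1 by rewrite eQ size_Mmonic.
have sQ'0 : (0 < size Q')%N by rewrite size_poly_gt0.
have npQ' : ~~ (p %| Q').
  by apply: contra (hsq p mp ip) => pQ'; rewrite eQ dvdp_mul ?dvdpp.
rewrite (perm_big _ (perm_to_rem ps)) big_cons.
have sQ'n : (size Q' <= n)%N by move: sQ; rewrite sQe; lia.
have H := IH Q' (rem p s) sQ'n Q'0.
have {H}H : ((size Q').-1 <= \sum_(j <- rem p s) (size j).-1)%N.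
  apply: H.
  - move=> r mr ir; apply: contra (hsq r mr ir) => rQ'.
    by rewrite eQ dvdp_mulr.
  - move=> r mr ir rQ'.
    have rs : r \in s by apply: hin => //; rewrite eQ dvdp_mulr.
    move: rs; rewrite (perm_mem (perm_to_rem ps)) inE => /orP[/eqP e|] //.
    by move: npQ'; rewrite -e rQ'.
rewrite sQe; apply: (leq_trans _ (leq_add (leqnn (size p).-1) H)); lia.
Qed.



Lemma cardF_natr : (#|F|%:R : F) = 0.
Proof.
have [p pc e] := card_pexp F.
rewrite e natrX (pcharf0 pc) expr0n.
case: eqP => // l0; have := finNzRing_gt1 F; by rewrite e l0.
Qed.

Lemma Q_sqf N (p : {poly F}) : (0 < N)%N -> p \is monic -> irreducible_poly p ->
  ~~ (p * p %| 'X^(#|F| ^ N) - 'X).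
Proof.
move=> N0 mp ip; apply/negP => /dvdpP [r e].
have : p %| ('X^(#|F| ^ N) - 'X)^`().
  rewrite e !derivM !mulrDr mulrA.
  apply: dvdp_add; last apply: dvdp_add; apply: dvdp_mull; rewrite ?dvdp_mulr ?dvdpp //.
rewrite derivB derivXn derivX -mulr_natl -polyC_natr natrX cardF_natr.
rewrite expr0n (negPf (lt0n_neq0 N0)) mul0r add0r dvdpNr.
move/(dvdp_leq (oner_neq0 _)); rewrite size_poly1.
by case: ip => s1 _; rewrite leqNgt s1.
Qed.


Lemma lower_bound g :
  (#|F| ^ (2 * g + 1) <= (2 * g + 1) * pi_ F (2 * g + 1)
      + \sum_(d <- iota 1 g) d * pi_ F d)%N.
Proof.
set N := (2 * g + 1)%N.
have N0 : (0 < N)%N by rewrite /N addn1.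
have q1 := finNzRing_gt1 F.
have qN : (1 < #|F| ^ N)%N by rewrite -(expn0 #|F|) ltn_exp2l.
have Q0 : ('X^(#|F| ^ N) - 'X : {poly F}) != 0.
  by rewrite -size_poly_gt0 sizeXmX.
set s := (irr_seq F N ++ flatten [seq irr_seq F d | d <- iota 1 g]).
have hin : forall p : {poly F}, p \is monic -> irreducible_poly p ->
    p %| 'X^(#|F| ^ N) - 'X -> p \in s.
  move=> p mp ip pQ.
  have mi : monic_irr p by apply/monic_irrP.
  have sp1 : (1 < size p)%N by case: ip.
  have dN := factA (ip, mp) pQ.
  set d := (size p).-1 in dN.
  have spd : size p = d.+1 by rewrite /d prednK // ltnW.
  rewrite mem_cat; case: (eqVneq d N) => [dNe|dNn].
    by rewrite mem_irr_seq mi spd dNe eqxx.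
  apply/orP; right; apply/flattenP; exists (irr_seq F d).
    apply: map_f; rewrite mem_iota.
    have d0 : (0 < d)%N by rewrite /d -ltnS prednK // ltnW.
    case/dvdnP: dN => k hk.
    have dg : (d <= g)%N.
      case: k hk => [|[|k]] hk.
      - by move: hk; rewrite /N mul0n addn1.
      - by move: dNn; rewrite hk mul1n eqxx.
      - move: hk; rewrite /N; nia.
    apply/andP; split; lia.
  by rewrite mem_irr_seq mi spd eqxx.
have := sqf_bound Q0 (fun p mp ip => Q_sqf N0 mp ip) hin.
rewrite sizeXmX // big_cat big_flatten big_map sum_irr_seq /=.
by under eq_bigr => d _ do rewrite sum_irr_seq.
Qed.

End Lower.

Lemma geo_bound q g : (1 < q)%N -> (\sum_(d <- iota 1 g) q ^ d <= 2 * q ^ g)%N.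
Proof.
move=> q1; elim: g => [|g IH]; first by rewrite big_nil.
have -> : iota 1 g.+1 = iota 1 g ++ [:: g.+1] by rewrite -[g.+1]addn1 iotaD add1n addn1.
rewrite big_cat big_seq1 /=.
apply: (leq_trans (leq_add IH (leqnn _))).
rewrite expnS; nia.
Qed.

Section Est.
Variable F : finFieldType.

Lemma pi_lower g :
  (#|F| ^ (2 * g + 1) <= (2 * g + 1) * pi_ F (2 * g + 1) + 2 * #|F| ^ g)%N.
Proof.
apply: (leq_trans (lower_bound F g)); rewrite leq_add2l.
apply: leq_trans (geo_bound g (finNzRing_gt1 F)).
elim: (iota 1 g) => [|d s IH]; first by rewrite !big_nil.
by rewrite !big_cons leq_add // upper_bound.
Qed.

Lemma pi_upper g : ((2 * g + 1) * pi_ F (2 * g + 1) <= #|F| ^ (2 * g + 1))%N.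
Proof. exact: upper_bound. Qed.

End Est.

Section Pmult.
Variable F : finFieldType.
Implicit Types Q f h : {poly F}.

Lemma exp_dvd_lt Q f e : (1 < size Q)%N -> f != 0 -> Q ^+ e %| f -> (e < size f)%N.
Proof.
move=> sQ f0 /(dvdp_leq f0) le.
have := size_exp Q e.
have : (0 < size (Q ^+ e))%N.
  by rewrite size_poly_gt0 expf_neq0 // -size_poly_gt0 ltnW.
move: le; case: (size (Q ^+ e)) => // k le _ /= ek.
have : (e <= (size Q).-1 * e)%N by rewrite leq_pmull // -ltnS prednK // ltnW.
by move=> h; rewrite (leq_ltn_trans h) // -ek.
Qed.

Lemma pmult_spec Q f : (1 < size Q)%N -> f != 0 ->
  Q ^+ (pmult Q f) %| f /\ ~~ (Q ^+ (pmult Q f).+1 %| f).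
Proof.
move=> sQ f0; rewrite /pmult.
have sf : (0 < size f)%N by rewrite size_poly_gt0.
have card : (0 < #|[pred e : 'I_(size f) | (Q ^+ e %| f)%R]|)%N.
  apply/card_gt0P; exists (Ordinal sf); by rewrite inE /= expr0 dvd1p.
have [i0 Pi0 e0] := eq_bigmax_cond (fun e : 'I_(size f) => nat_of_ord e) card.
rewrite e0; split; first by move: Pi0; rewrite inE.
apply/negP => H.
have lt := exp_dvd_lt sQ f0 H.
have := @leq_bigmax_cond _ [pred e : 'I_(size f) | (Q ^+ e %| f)%R]
   (fun e : 'I_(size f) => nat_of_ord e) (Ordinal lt).
by rewrite inE /= e0 ltnn => /(_ H).
Qed.

Lemma pmult_uniq Q f m : (1 < size Q)%N -> f != 0 ->
  Q ^+ m %| f -> ~~ (Q ^+ m.+1 %| f) -> pmult Q f = m.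
Proof.
move=> sQ f0 h1 h2; have [k1 k2] := pmult_spec sQ f0.
apply/eqP; rewrite eqn_leq; apply/andP; split.
  rewrite leqNgt; apply/negP => lt; move/negP: h2; apply.
  by apply: dvdp_trans k1; apply: dvdp_exp2l.
rewrite leqNgt; apply/negP => lt; move/negP: k2; apply.
by apply: dvdp_trans h1; apply: dvdp_exp2l.
Qed.

Lemma pmult_sq Q h : (1 < size Q)%N -> irreducible_poly Q -> h != 0 ->
  pmult Q (h ^+ 2) = (2 * pmult Q h)%N.
Proof.
move=> sQ iQ h0; have [k1 k2] := pmult_spec sQ h0.
set v := pmult Q h in k1 k2 *.
apply: pmult_uniq => //; first by rewrite expf_neq0.
  by rewrite mulnC exprM dvdp_exp2r.
case/dvdpP: k1 => h' eh.
have Q0 : Q != 0 by rewrite -size_poly_gt0 ltnW.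
have nQ : ~~ (Q %| h').
  by apply: contra k2 => Qh'; rewrite eh exprS dvdp_mul ?dvdpp.
have cop : coprimep Q h' by rewrite irreducible_poly_coprime.
have r0 : Q ^+ (v * 2) != 0 by rewrite expf_neq0.
rewrite eh exprMn -exprM mulnC exprS.
rewrite (dvdp_mul2r _ _ r0).
by rewrite expr2 Gauss_dvdpl.
Qed.

End Pmult.

Section Chi.
Variable F : finFieldType.

Lemma chi_sq g (t : {ffun 'I_(2 * g + 1) -> F}) n (u : {ffun 'I_n -> F}) :
  monic_irr (mkmonic t) -> (n <= g)%N -> is_msquare (mkmonic u) ->
  chiP (mkmonic t) (mkmonic u) = 1.
Proof.
move=> /monic_irrP [mP iP] ng /pdecP [h [mh fe]].
have h0 : h != 0 by apply: monic_neq0.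
have pm : forall Q : {poly F}, (1 < size Q)%N -> irreducible_poly Q ->
    pmult Q (mkmonic u) = (2 * pmult Q h)%N by move=> Q sQ iQ; rewrite fe pmult_sq.
rewrite /chiP /jacobi; apply: big1 => d _; apply: big1 => t' /monic_irrP [mQ iQ].
have dn : (d <= n)%N.
  have := ltn_ord d; have := size_mkmonic u; move: (nat_of_ord d) => dd ->; by rewrite ltnS.
have sQ : (1 < size (mkmonic t'))%N by case: iQ.
have nQP : ~~ (mkmonic t' %| mkmonic t).
  apply/negP => QP.
  have sQn : size (mkmonic t') != 1%N by rewrite neq_ltn sQ orbT.
  case: iP => _ /(_ _ sQn QP) /eqp_size.
  rewrite (size_mkmonic t') (size_mkmonic t); lia.
rewrite /legendre (negPf nQP).
rewrite pm //.
by case: pdec; rewrite ?expr1n // exprM sqrrN !expr1n.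
Qed.

End Chi.

Section Sq.
Variable F : finFieldType.

Lemma sq_inj (a b : {poly F}) : a \is monic -> b \is monic -> a ^+ 2 = b ^+ 2 -> a = b.
Proof.
move=> ma mb e.
have : (a - b) * (a + b) = 0 by rewrite -subr_sqr e subrr.
move/eqP; rewrite mulf_eq0 => /orP [|]; first by rewrite subr_eq0 => /eqP.
rewrite addr_eq0 => /eqP ab.
have l : (1 : F) = -1.
  by move: (congr1 lead_coef ab); rewrite lead_coefN (monicP ma) (monicP mb).
by rewrite ab -scaleN1r -l scale1r.
Qed.

Lemma size_sq (h : {poly F}) : h \is monic -> size (h ^+ 2) = ((size h).-1 * 2).+1.
Proof.
move=> mh; rewrite -size_exp prednK // size_poly_gt0 monic_neq0 //.
exact: monic_exp.
Qed.

Definition sqf m : {ffun 'I_m -> F} -> {ffun 'I_(m * 2) -> F} :=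
  fun w => [ffun i : 'I_(m * 2) => ((mkmonic w) ^+ 2)`_i].

Lemma mkmonic_sqf m (w : {ffun 'I_m -> F}) : mkmonic (sqf w) = (mkmonic w) ^+ 2 :> {poly F}.
Proof.
apply: mkmonic_surj; first by apply: monic_exp; apply: monic_mkmonic.
by rewrite size_sq ?monic_mkmonic // size_mkmonic.
Qed.

Lemma sqf_inj m : injective (@sqf m).
Proof.
move=> w1 w2 e; apply: mkmonic_inj; apply: sq_inj; rewrite ?monic_mkmonic //.
by rewrite -!mkmonic_sqf e.
Qed.

Lemma card_sq n :
  #|[pred u : {ffun 'I_n -> F} | is_msquare (mkmonic u)]| =
  if odd n then 0%N else (#|F| ^ n./2)%N.
Proof.
case: ifP => on.
  apply: eq_card0 => u; rewrite inE /=; apply/negP => /pdecP [h [mh e]].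
  have := size_mkmonic u; rewrite e size_sq // => [[]] en.
  by move: on; rewrite -en oddM andbF.
have [m ->] : exists m, n = (m * 2)%N.
  by exists n./2; rewrite muln2 -[LHS]odd_double_half on.
have -> : ((m * 2)./2 = m)%N by rewrite muln2 doubleK.
rewrite -[in RHS](card_ord m) -card_ffun -cardsT -(card_imset _ (@sqf_inj m)).
apply: eq_card => u; rewrite inE /=; apply/idP/imsetP.
  move=> /pdecP [h [mh e]].
  have sh : size h = m.+1.
    have := size_mkmonic u; rewrite e size_sq //; case=> em.
    have : (0 < size h)%N by rewrite size_poly_gt0 monic_neq0.
    by move=> s0; move/eqP: em; rewrite eqn_mul2r /= => /eqP <-; rewrite prednK.
  exists [ffun i : 'I_m => h`_i] => //.
  apply/ffunP => i; rewrite /sqf !ffunE mkmonic_surj //.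
  by rewrite -e mkmonic_coefI.
move=> [w _ ->]; apply/pdecP; exists (mkmonic w); split.
  exact: monic_mkmonic.
exact: mkmonic_sqf.
Qed.

End Sq.

Unset Implicit Arguments.

Lemma W_sum (R : rcfType) (q : R) g : 0 < q ->
  \sum_(n < g.+1) (((if odd n then 0 else (q ^+ n./2)) * (Num.sqrt q) ^- n)) =
  (g./2).+1%:R.
Proof.
move=> q0.
have sq2 : Num.sqrt q ^+ 2 = q by rewrite sqr_sqrtr // ltW.
elim: g => [|g IH].
  by rewrite big_ord_recr big_ord0 /= expr0 invr1 mulr1 add0r.
rewrite big_ord_recr /= IH.
rewrite uphalf_half.
case og : (odd g) => /=.
  rewrite add1n -[(g./2).+2]addn1 [in RHS]natrD.
  have -> : g.+1 = (2 * g./2.+1)%N.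
    by rewrite -[in LHS](odd_double_half g) og mul2n.
  rewrite exprM sq2 divff // expf_neq0 // gt_eqF //.
by rewrite add0n mul0r addr0.
Qed.

Theorem proposition3p1 (F : finFieldType) (R : rcfType) :
  odd #|F| -> (#|F| %% 4 = 1)%N ->
  exists C : R, exists g0 : nat, forall g : nat, (g0 <= g)%N ->
    let q : R := (#|F|)%:R in
    let absP : R := q ^+ (2 * g + 1) in
    let logP : R := (2 * g + 1)%:R in
    `| (\sum_(t : {ffun 'I_(2 * g + 1) -> F} | monic_irr (mkmonic t))
          \sum_(n < g.+1)
            \sum_(u : {ffun 'I_n -> F} | is_msquare (mkmonic u))
              (chiP (mkmonic t) (mkmonic u))%:~R * (Num.sqrt q) ^- n)
       - absP / logP * ((g./2).+1)%:R |
    <= C * (Num.sqrt absP / logP * g%:R).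
Proof.
move=> _ _; exists 2, 1%N => g g1 /=.
set q : R := #|F|%:R.
have q1 : (1 < #|F|)%N := finNzRing_gt1 F.
have q0 : 0 < q by rewrite /q ltr0n ltnW.
set k := (g./2).+1.
have -> : \sum_(t : {ffun 'I_(2 * g + 1) -> F} | monic_irr (mkmonic t))
          \sum_(n < g.+1)
            \sum_(u : {ffun 'I_n -> F} | is_msquare (mkmonic u))
              ((chiP (mkmonic t) (mkmonic u))%:~R * (Num.sqrt q) ^- n : R)
   = (pi_ F (2 * g + 1))%:R * k%:R.
  rewrite [RHS]mulr_natl -sumr_const; apply: eq_bigr => t mt.
  rewrite /k -(@W_sum R q g q0); apply: eq_bigr => n _.
  have ng : (n <= g)%N by rewrite -ltnS ltn_ord.
  rewrite (eq_bigr (fun _ => (Num.sqrt q) ^- n)); last first.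
    by move=> u su; rewrite (chi_sq mt ng su) mul1r.
  rewrite sumr_const card_sq -mulr_natl; congr (_ * _).
  by case: (odd n); rewrite ?natrX.
set N := (2 * g + 1)%N.
set pi := pi_ F N.
have N0 : (N%:R : R) != 0 by rewrite pnatr_eq0 /N addn1.
have Npos : (0 : R) < N%:R by rewrite ltr0n /N addn1.
have up : ((N * pi)%:R : R) <= q ^+ N by rewrite /q -natrX ler_nat pi_upper.
have lo : q ^+ N <= (N * pi)%:R + 2 * q ^+ g.
  by have := pi_lower F g; rewrite -(ler_nat R) natrD !natrM !natrX -/N -/pi.
have key : `|(N * pi)%:R - q ^+ N| <= 2 * q ^+ g.
  have hg : 0 <= q ^+ g by rewrite exprn_ge0 // ltW.
  rewrite distrC ler_norml; apply/andP; split; lra.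
have sq : q ^+ g <= Num.sqrt (q ^+ N).
  rewrite -(ger0_norm (exprn_ge0 g (ltW q0))) -sqrtr_sqr ler_sqrt ?exprn_ge0 ?ltW //.
  have q1' : 1 < q by rewrite /q ltr1n.
  rewrite -exprM /N (ltr_eXn2l q1'); lia.
have kg : (k%:R : R) <= g%:R.
  rewrite ler_nat /k; have h := odd_double_half g; move: h; rewrite -muln2; case: (odd g) => /= h; lia.
have -> : pi%:R * k%:R - q ^+ N / N%:R * k%:R =
    k%:R / N%:R * ((N * pi)%:R - q ^+ N).
  by rewrite natrM; field.
rewrite normrM ger0_norm ?divr_ge0 ?ler0n //.
have -> : 2 * (Num.sqrt (q ^+ N) / N%:R * g%:R) =
    g%:R / N%:R * (2 * Num.sqrt (q ^+ N)).
  by field.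
apply: ler_pM; rewrite ?divr_ge0 ?ler0n ?normr_ge0 //.
  by rewrite ler_pM2r ?invr_gt0.
apply: (le_trans key); rewrite ler_pM2l //.
Qed.
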